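(* Let $N, K \geq 2$ be integers, let $N_0>0$, $P>0$, $T>0$, and fix an index $i \in \{1,\ldots,K\}$. Let $\mathbf{s}_k \in \mathbb{C}^N$ for $k \neq i$ be given and fixed, and consider $$\operatorname{SINR}(\mathbf{s}_i)_i = \left\{ \frac{1}{6N^2}\sum_{k=1, k\neq i}^K \sum_{m=1}^N S_m^{i,k} + \frac{N_0}{2PT}\right\}^{-1/2}$$ as a function of $\mathbf{s}_i \in \mathbb{C}^N$ subject to $\|\mathbf{s}_i\|^2 = N$. Let $\lambda^{(i)}_{\min}\ (\geq 0)$ be the minimum eigenvalue of the positive semidefinite Hermitian matrix $$\Sigma_i = \sum_{k=1, k \neq i}^K \sum_{m=1}^N \left[(\mathbf{s}_k^* Q_m \mathbf{s}_k) Q_m + (\mathbf{s}_k^* \hat{Q}_m \mathbf{s}_k)\hat{Q}_m\right],$$ and let $\mathbf{u}_i$ be a corresponding eigenvector with $\|\mathbf{u}_i\|=1$. Then $\mathbf{s}_i^\star = \sqrt{N}\,\mathbf{u}_i$ maximizes $\operatorname{SINR}(\mathbf{s}_i)_i$ over all $\mathbf{s}_i\in\mathbb{C}^N$ with $\|\mathbf{s}_i\|^2=N$, and the maximum value is $$\operatorname{SINR}_i^\star = \operatorname{SINR}(\mathbf{s}_i^\star)_i = \left\{\frac{\lambda^{(i)}_{\min}}{6N} + \frac{N_0}{2PT}\right\}^{-1/2}.$$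
   Context: Indices run over $1,\ldots,N$; $j$ is the imaginary unit and $\mathbf{z}^*$ denotes conjugate transpose. $V$ and $\hat V$ are the $N\times N$ unitary matrices with entries $V_{m,n} = \frac{1}{\sqrt N}\exp(-2\pi j \frac{mn}{N})$ and $\hat V_{m,n} = \frac{1}{\sqrt N}\exp\!\left(-2\pi j n(\frac{m}{N} + \frac{1}{2N})\right)$. For $m=1,\ldots,N$, $C_m$ (resp. $\hat C_m$) is the $N\times N$ diagonal matrix whose only nonzero entry is the $(m,m)$ entry, equal to $\sqrt{1+\frac12\cos(2\pi \frac mN)}$ (resp. $\sqrt{1+\frac12\cos(2\pi(\frac mN+\frac1{2N}))}$). Set $Q_m = V^* C_m V$ and $\hat Q_m = \hat V^* \hat C_m \hat V$. For sequences $\mathbf{s}_i,\mathbf{s}_k\in\mathbb{C}^N$, $S_m^{i,k} = (\mathbf{s}_i^* Q_m \mathbf{s}_i)(\mathbf{s}_k^* Q_m \mathbf{s}_k) + (\mathbf{s}_i^* \hat Q_m \mathbf{s}_i)(\mathbf{s}_k^* \hat Q_m \mathbf{s}_k)$. (This SINR models user $i$ of a $K$-user asynchronous BPSK CDMA system with spreading sequences $\mathbf{s}_k$ of length $N$, signal power $P$, symbol duration $T$ and noise spectral density $N_0/2$.) *)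

(* Defs.v *)
From mathcomp Require Import all_boot all_order all_algebra.
From mathcomp Require Import all_classical all_reals all_analysis.
From mathcomp Require Import complex.
Set Implicit Arguments. Unset Strict Implicit. Unset Printing Implicit Defensive.
Import GRing.Theory Num.Theory.
Local Open Scope ring_scope.

(* exp(-2 pi j theta) = cos(2 pi theta) - j sin(2 pi theta) *)
Definition cexpm2pij (R : realType) (theta : R) : R[i] :=
  Complex (cos (2 * pi * theta)) (- sin (2 * pi * theta)).

(* Indices run over 1..N; the ordinal a : 'I_N stands for the index a.+1. *)
Definition Vmx (R : realType) (N : nat) : 'M[R[i]]_N :=
  \matrix_(a, b)
    ((Complex (Num.sqrt (N%:R : R))^-1 0) *
     cexpm2pij ((a.+1 * b.+1)%:R / N%:R : R)).

Definition Vhatmx (R : realType) (N : nat) : 'M[R[i]]_N :=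
  \matrix_(a, b)
    ((Complex (Num.sqrt (N%:R : R))^-1 0) *
     cexpm2pij ((b.+1)%:R * ((a.+1)%:R / N%:R + (2 * N%:R)^-1) : R)).

Definition Cmx (R : realType) (N : nat) (m : 'I_N) : 'M[R[i]]_N :=
  \matrix_(a, b)
    (if (a == m) && (b == m) then
       Complex (Num.sqrt (1 + 2^-1 * cos (2 * pi * ((m.+1)%:R / N%:R)))) 0
     else 0).

Definition Chatmx (R : realType) (N : nat) (m : 'I_N) : 'M[R[i]]_N :=
  \matrix_(a, b)
    (if (a == m) && (b == m) then
       Complex (Num.sqrt (1 + 2^-1 * cos (2 * pi * ((m.+1)%:R / N%:R
                                                   + (2 * N%:R)^-1)))) 0
     else 0).

Definition adjmx (R : realType) (m n : nat) (A : 'M[R[i]]_(m, n)) : 'M[R[i]]_(n, m) :=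
  (map_mx (@conjc R) A)^T.

Definition Qmx (R : realType) (N : nat) (m : 'I_N) : 'M[R[i]]_N :=
  adjmx (Vmx R N) *m Cmx R m *m Vmx R N.

Definition Qhatmx (R : realType) (N : nat) (m : 'I_N) : 'M[R[i]]_N :=
  adjmx (Vhatmx R N) *m Chatmx R m *m Vhatmx R N.

Definition qform (R : realType) (N : nat) (z : 'cV[R[i]]_N) (A : 'M[R[i]]_N) : R[i] :=
  (adjmx z *m A *m z) ord0 ord0.

Definition sqnorm (R : realType) (N : nat) (z : 'cV[R[i]]_N) : R :=
  complex.Re ((adjmx z *m z) ord0 ord0).

Definition Smik (R : realType) (N : nat) (m : 'I_N) (si sk : 'cV[R[i]]_N) : R[i] :=
  qform si (Qmx R m) * qform sk (Qmx R m) + qform si (Qhatmx R m) * qform sk (Qhatmx R m).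

(* SINR of user i when its sequence is x and the others are s k, k <> i.
   The interference sum is real (Hermitian forms); we take its real part. *)
Definition SINR (R : realType) (N K : nat) (N0 P T : R)
    (s : 'I_K -> 'cV[R[i]]_N) (i : 'I_K) (x : 'cV[R[i]]_N) : R :=
  ((6 * (N%:R) ^+ 2)^-1 *
     complex.Re (\sum_(k < K | k != i) \sum_(m < N) Smik m x (s k))
   + N0 / (2 * P * T)) `^ (- 2^-1).

Definition Sigma (R : realType) (N K : nat) (s : 'I_K -> 'cV[R[i]]_N) (i : 'I_K)
  : 'M[R[i]]_N :=
  \sum_(k < K | k != i) \sum_(m < N)
     (qform (s k) (Qmx R m) *: Qmx R m + qform (s k) (Qhatmx R m) *: Qhatmx R m).

(* Main.v *)
Require Import Defs.
From mathcomp Require Import all_boot all_order all_algebra.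
From mathcomp Require Import all_classical all_reals all_analysis.
From mathcomp Require Import complex.
From mathcomp Require Import sesquilinear spectral.
From mathcomp Require Import ring lra.
Import GRing.Theory Num.Theory.
Local Open Scope ring_scope.

Module Helpers.
Set Implicit Arguments. Unset Strict Implicit.

Section Aux.
Variable R : realType.
Implicit Types N : nat.
Local Notation C := (R[i]).

Lemma adjmx_mul m n p (A : 'M[C]_(m, n)) (B : 'M[C]_(n, p)) :
  adjmx (A *m B) = adjmx B *m adjmx A.
Proof. by rewrite /adjmx map_mxM trmx_mul. Qed.

Lemma adjmxK m n (A : 'M[C]_(m, n)) : adjmx (adjmx A) = A.
Proof. by apply/matrixP => a b; rewrite !mxE conjcK. Qed.

Lemma adjmxD m n (A B : 'M[C]_(m, n)) : adjmx (A + B) = adjmx A + adjmx B.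
Proof. by apply/matrixP => a b; rewrite !mxE rmorphD. Qed.

Lemma adjmx0 m n : adjmx (0 : 'M[C]_(m, n)) = 0.
Proof. by apply/matrixP => a b; rewrite !mxE rmorph0. Qed.

Lemma adjmxZ m n a (A : 'M[C]_(m, n)) : adjmx (a *: A) = conjc a *: adjmx A.
Proof. by apply/matrixP => x y; rewrite !mxE rmorphM. Qed.

Lemma qformD N (x : 'cV[C]_N) A B : qform x (A + B) = qform x A + qform x B.
Proof. by rewrite /qform mulmxDr mulmxDl mxE. Qed.

Lemma qform0 N (x : 'cV[C]_N) : qform x 0 = 0.
Proof. by rewrite /qform mulmx0 mul0mx mxE. Qed.

Lemma qformZ N (x : 'cV[C]_N) a A : qform x (a *: A) = a * qform x A.
Proof. by rewrite /qform -scalemxAr -scalemxAl mxE. Qed.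


Lemma qform_sum N (x : 'cV[C]_N) (I : Type) (r : seq I) (P : pred I) (F : I -> 'M[C]_N) :
  qform x (\sum_(k <- r | P k) F k) = \sum_(k <- r | P k) qform x (F k).
Proof. exact: (big_morph (qform x) (qformD x) (qform0 x)). Qed.

Lemma adjmx_sum N (I : Type) (r : seq I) (P : pred I) (F : I -> 'M[C]_N) :
  adjmx (\sum_(k <- r | P k) F k) = \sum_(k <- r | P k) adjmx (F k).
Proof. exact: (big_morph _ (@adjmxD N N) (@adjmx0 N N)). Qed.

Lemma qformZx N (x : 'cV[C]_N) a A : qform (a *: x) A = conjc a * a * qform x A.
Proof.
rewrite /qform adjmxZ.
have -> : (conjc a *: adjmx x) *m A *m (a *: x) = (conjc a * a) *: (adjmx x *m A *m x).
  by rewrite -!scalemxAl -scalemxAr scalerA.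
exact: mxE.
Qed.

Lemma selfZ N (x : 'cV[C]_N) a : (adjmx (a *: x) *m (a *: x)) 0 0 = conjc a * a * (adjmx x *m x) 0 0.
Proof.
rewrite adjmxZ.
have -> : (conjc a *: adjmx x) *m (a *: x) = (conjc a * a) *: (adjmx x *m x).
  by rewrite -!scalemxAl -scalemxAr scalerA.
exact: mxE.
Qed.
Lemma qform_conj N (x : 'cV[C]_N) (W D : 'M[C]_N) :
  qform x (adjmx W *m D *m W) = qform (W *m x) D.
Proof. by rewrite /qform adjmx_mul !mulmxA. Qed.

Lemma ge0_conj (a : C) : 0 <= a -> conjc a = a.
Proof. by case: a => ar ai; rewrite lecE /= => /andP[/eqP -> _]; rewrite oppr0. Qed.

Lemma norm_ge0 (y : C) : 0 <= conjc y * y.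
Proof. by rewrite mulrC; apply: mulcJ_ge0. Qed.

Lemma adj_self_ge0 N (x : 'cV[C]_N) : 0 <= (adjmx x *m x) 0 0.
Proof.
rewrite mxE; apply: sumr_ge0 => j _; rewrite !mxE; exact: norm_ge0.
Qed.

Lemma adj_self N (x : 'cV[C]_N) : (adjmx x *m x) 0 0 = Complex (sqnorm x) 0.
Proof.
rewrite /sqnorm; have := adj_self_ge0 x.
by case: ((adjmx x *m x) 0 0) => a b; rewrite lecE /= => /andP[/eqP -> _].
Qed.

Section Dsec.
Variables (N : nat) (m : 'I_N) (r : R) (D : 'M[C]_N).
Hypothesis r0 : 0 <= r.
Hypothesis DE : forall a b, D a b = if (a == m) && (b == m) then Complex r 0 else 0.

Lemma qform_D (y : 'cV[C]_N) : qform y D = conjc (y m 0) * Complex r 0 * y m 0.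
Proof.
rewrite /qform mxE (bigD1 m) //= big1 ?addr0; last first.
  move=> b /negbTE bm; rewrite mxE big1 ?mul0r // => a _.
  by rewrite DE bm andbF mulr0.
rewrite mxE (bigD1 m) //= big1 ?addr0; last first.
  by move=> a /negbTE am; rewrite DE am /= mulr0.
by rewrite DE eqxx !mxE.
Qed.

Lemma qform_D_ge0 (y : 'cV[C]_N) : 0 <= qform y D.
Proof.
rewrite qform_D mulrC mulrA; apply: mulr_ge0; first exact: mulcJ_ge0.
by rewrite lecE /= eqxx.
Qed.

Lemma adjD : adjmx D = D.
Proof.
apply/matrixP => a b; rewrite !mxE !DE andbC.
case: ifP => _ /=; last by rewrite oppr0.
by rewrite oppr0.
Qed.

Lemma psd_conjD (W : 'M[C]_N) (x : 'cV[C]_N) : 0 <= qform x (adjmx W *m D *m W).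
Proof. rewrite qform_conj; exact: qform_D_ge0. Qed.

Lemma herm_conjD (W : 'M[C]_N) : adjmx (adjmx W *m D *m W) = adjmx W *m D *m W.
Proof. by rewrite !adjmx_mul adjmxK adjD mulmxA. Qed.
End Dsec.

End Aux.

Section Aux2.
Variable R : realType.
Local Notation C := (R[i]).
Variables (N K : nat) (s : 'I_K -> 'cV[C]_N) (i : 'I_K).

Lemma Cmx_E (m : 'I_N) a b : Cmx R m a b = if (a == m) && (b == m) then
   Complex (Num.sqrt (1 + 2^-1 * cos (2 * pi * ((m.+1)%:R / N%:R)))) 0 else 0.
Proof. by rewrite mxE. Qed.

Lemma Chatmx_E (m : 'I_N) a b : Chatmx R m a b = if (a == m) && (b == m) then
   Complex (Num.sqrt (1 + 2^-1 * cos (2 * pi * ((m.+1)%:R / N%:R + (2 * N%:R)^-1)))) 0 else 0.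
Proof. by rewrite mxE. Qed.

Lemma Q_psd m (x : 'cV[C]_N) : 0 <= qform x (Qmx R m).
Proof. exact: (psd_conjD (sqrtr_ge0 _) (Cmx_E m)). Qed.

Lemma Qh_psd m (x : 'cV[C]_N) : 0 <= qform x (Qhatmx R m).
Proof. exact: (psd_conjD (sqrtr_ge0 _) (Chatmx_E m)). Qed.

Lemma Q_herm (m : 'I_N) : adjmx (Qmx R m) = Qmx R m.
Proof. rewrite /Qmx; exact: (herm_conjD (Cmx_E m)). Qed.

Lemma Qh_herm (m : 'I_N) : adjmx (Qhatmx R m) = Qhatmx R m.
Proof. rewrite /Qhatmx; exact: (herm_conjD (Chatmx_E m)). Qed.

Lemma sum_S (x : 'cV[C]_N) :
  \sum_(k < K | k != i) \sum_(m < N) Smik m x (s k) = qform x (Sigma s i).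
Proof.
rewrite /Sigma qform_sum.
apply: eq_bigr => k _; rewrite qform_sum.
apply: eq_bigr => m _; rewrite qformD !qformZ /Smik.
by rewrite [qform x (Qmx R m) * _]mulrC [qform x (Qhatmx R m) * _]mulrC.
Qed.

Lemma Sigma_psd (x : 'cV[C]_N) : 0 <= qform x (Sigma s i).
Proof.
rewrite -sum_S; apply: sumr_ge0 => k _; apply: sumr_ge0 => m _.
rewrite /Smik; apply: addr_ge0; apply: mulr_ge0.
- exact: Q_psd.
- exact: Q_psd.
- exact: Qh_psd.
- exact: Qh_psd.
Qed.

Lemma Sigma_herm : adjmx (Sigma s i) = Sigma s i.
Proof.
rewrite /Sigma adjmx_sum.
apply: eq_bigr => k _; rewrite adjmx_sum.
apply: eq_bigr => m _; rewrite adjmxD !adjmxZ Q_herm Qh_herm.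
by rewrite (ge0_conj (Q_psd _ _)) (ge0_conj (Qh_psd _ _)).
Qed.

End Aux2.

Section Aux3.
Variable R : realType.
Local Notation C := (R[i]).

Lemma min_eig N (A : 'M[C]_N) (lam : R) :
  adjmx A = A ->
  (forall mu : C, eigenvalue A mu -> Complex lam 0 <= mu) ->
  forall x : 'cV[C]_N, Complex lam 0 * (adjmx x *m x) 0 0 <= qform x A.
Proof.
move=> hA hmin x.
have herm : A \is hermsymmx.
  apply/is_hermitianmxP; rewrite expr0 scale1r.
  apply/matrixP => a b; rewrite -[in LHS]hA !mxE; reflexivity.
have /orthomx_spectralP AE := hermitian_normalmx herm.
set P := spectralmx A in AE; set d := spectral_diag A in AE.
have Pu : P \in unitmx := spectral_unit A.
have IA : invmx P = adjmx P.
  rewrite (invmx_unitary (spectral_unitarymx A)).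
  by apply/matrixP => a b; rewrite !mxE.
set y := P *m x.
have E1 : qform x A = \sum_j conjc (y j 0) * d 0 j * y j 0.
  rewrite [in LHS]AE IA qform_conj /qform mxE.
  apply: eq_bigr => j _; rewrite mul_mx_diag !mxE; reflexivity.
have E2 : (adjmx x *m x) 0 0 = \sum_j conjc (y j 0) * y j 0.
  have -> : adjmx x *m x = adjmx y *m y.
    by rewrite /y adjmx_mul -IA mulmxA -(mulmxA _ (invmx P)) mulVmx // mulmx1.
  by rewrite mxE; apply: eq_bigr => j _; rewrite !mxE.
rewrite E1 E2 -subr_ge0 mulr_sumr -sumrB; apply: sumr_ge0 => j _.
have -> : conjc (y j 0) * d 0 j * y j 0 - Complex lam 0 * (conjc (y j 0) * y j 0)
   = (d 0 j - Complex lam 0) * (conjc (y j 0) * y j 0).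
  by rewrite mulrBl [conjc _ * d 0 j]mulrC -mulrA.
apply: mulr_ge0; last exact: norm_ge0.
rewrite subr_ge0; apply: hmin.
apply/eigenvalueP; exists (row j P).
  rewrite -row_mul {1}AE !mulmxA mulmxV // mul1mx mul_diag_mx.
  by apply/rowP => k; rewrite !mxE.
apply/eqP => /rowP H0.
have := mulmxV Pu; move/matrixP/(_ j j); rewrite !mxE eqxx big1.
  by move/eqP; rewrite eq_sym oner_eq0.
by move=> k _; have := H0 k; rewrite !mxE => ->; rewrite mul0r.
Qed.

End Aux3.

End Helpers.
Import Helpers.

Theorem mainTheorem1 (R : realType) (N K : nat) (N0 P T : R)
    (s : 'I_K -> 'cV[R[i]]_N) (i : 'I_K)
    (lammin : R) (u : 'cV[R[i]]_N) :
  (2 <= N)%N -> (2 <= K)%N -> 0 < N0 -> 0 < P -> 0 < T ->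
  (* lammin is the minimum eigenvalue of Sigma_i, u a unit eigenvector *)
  Sigma s i *m u = Complex lammin 0 *: u ->
  sqnorm u = 1 ->
  (forall mu : R[i], eigenvalue (Sigma s i) mu -> Complex lammin 0 <= mu) ->
  let sstar := (Complex (Num.sqrt (N%:R : R)) 0) *: u in
  sqnorm sstar = N%:R /\
  (forall x : 'cV[R[i]]_N, sqnorm x = N%:R ->
     SINR N0 P T s i x <= SINR N0 P T s i sstar) /\
  SINR N0 P T s i sstar = (lammin / (6 * N%:R) + N0 / (2 * P * T)) `^ (- 2^-1).
Proof.
move=> N2 K2 N0p Pp Tp hE hu hmin sstar.
pose rc := real_complex R.
have rcE : forall a : R, Complex a 0 = rc a by [].
have Nn0 : (N%:R : R) != 0 by rewrite pnatr_eq0 -lt0n; apply: leq_trans N2.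
have uu : (adjmx u *m u) 0 0 = 1 by rewrite adj_self hu.
have qu : qform u (Sigma s i) = Complex lammin 0.
  by rewrite /qform -mulmxA hE -scalemxAr mxE uu mulr1.
have lam0 : 0 <= lammin.
  by have := Sigma_psd s i u; rewrite qu rcE ler0c.
have cc : conjc (Complex (Num.sqrt (N%:R : R)) 0) * (Complex (Num.sqrt (N%:R : R)) 0) = rc N%:R.
  rewrite rcE conjc_real -rmorphM -expr2 sqr_sqrtr //.
have ss : (adjmx sstar *m sstar) 0 0 = rc N%:R.
  by rewrite /sstar selfZ uu mulr1 cc.
have qs : qform sstar (Sigma s i) = rc (N%:R * lammin).
  by rewrite /sstar qformZx qu cc rcE -rmorphM.
have c0 : 0 < N0 / (2 * P * T) by apply: divr_gt0 => //; apply: mulr_gt0 => //; apply: mulr_gt0.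
split; first by rewrite /sqnorm ss.
have ReRc : forall a : R, complex.Re (rc a) = a by [].
have key : forall x, sqnorm x = N%:R -> N%:R * lammin <= complex.Re (qform x (Sigma s i)).
  move=> x hx; have := min_eig (Sigma_herm s i) hmin x.
  by rewrite adj_self hx rcE -rmorphM lecE ReRc mulrC => /andP[_ h].
have sinr_s : SINR N0 P T s i sstar =
   ((6 * (N%:R) ^+ 2)^-1 * (N%:R * lammin) + N0 / (2 * P * T)) `^ (- 2^-1).
  by rewrite /SINR sum_S qs ReRc.
have N6 : 0 < (6 * (N%:R : R) ^+ 2)^-1.
  by rewrite invr_gt0; apply: mulr_gt0 => //; apply: exprn_gt0; rewrite lt0r Nn0 ler0n.
have apos : 0 < (6 * (N%:R : R) ^+ 2)^-1 * (N%:R * lammin) + N0 / (2 * P * T).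
  apply: ltr_wpDl => //; apply: mulr_ge0; first exact: Order.POrderTheory.ltW.
  by apply: mulr_ge0 => //; apply: ler0n.
split.
  move=> x hx; rewrite sinr_s /SINR sum_S !powRN.
  have bge : (6 * (N%:R : R) ^+ 2)^-1 * (N%:R * lammin) + N0 / (2 * P * T) <=
     (6 * (N%:R : R) ^+ 2)^-1 * complex.Re (qform x (Sigma s i)) + N0 / (2 * P * T).
    by rewrite lerD2r; apply: ler_wpM2l; [exact: Order.POrderTheory.ltW | exact: key].
  have bpos := Order.POrderTheory.lt_le_trans apos bge.
  rewrite lef_pV2 ?posrE ?powR_gt0 //.
  apply: ge0_ler_powR => //; rewrite ?invr_ge0 ?ler0n // nnegrE Order.POrderTheory.ltW //.
rewrite sinr_s; congr (_ `^ _); congr (_ + _); field.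
exact: Nn0.
Qed.
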